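(* Let $s\ge 1$, $q=2^s$, and let $k$ be an integer with $1\le k\le q/2$. Let $\beta\in\mathbb{F}_{q^2}$ be an element of multiplicative order $q+1$. Define $$g(X)=\prod_{i=\frac{q-k}{2}+1}^{\frac{q+k}{2}}(X-\beta^i)\quad\text{if $k$ is even},\qquad g(X)=\prod_{i=-\frac{k-1}{2}}^{\frac{k-1}{2}}(X-\beta^i)\quad\text{if $k$ is odd}.$$ Then $g(X)\in\mathbb{F}_q[X]$, $g$ is monic of degree $k$, $X^k g(X^{-1})=g(X)$, and, writing $g(X)=X^k+c_{k-1}X^{k-1}+\dots+c_1X+c_0$, the matrix $\mathsf{Companion}(c_0,\dots,c_{k-1})^k$ is MDS.
   Context: For $c_0,\dots,c_{k-1}\in\mathbb{F}_q$, $\mathsf{Companion}(c_0,\dots,c_{k-1})$ denotes the $k\times k$ matrix whose first $k-1$ rows are $e_2,e_3,\dots,e_k$ (ones on the superdiagonal, zeros elsewhere) and whose last row is $(c_0,c_1,\dots,c_{k-1})$. A linear code over $\mathbb{F}_q$ of length $n$ and dimension $k'$ is MDS if its minimal Hamming distance equals $n-k'+1$. A $k\times k$ matrix $M$ over $\mathbb{F}_q$ is called MDS if the $k\times 2k$ matrix $[I_k\mid M]$ generates an MDS code of length $2k$ and dimension $k$ (equivalently, minimal distance $k+1$). *)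

(* Defs.v *)
From HB Require Import structures.
From mathcomp Require Import all_boot all_order all_algebra.
Set Implicit Arguments. Unset Strict Implicit. Unset Printing Implicit Defensive.
Import GRing.Theory.
Local Open Scope ring_scope.

Definition Companion (R : nzRingType) (k : nat) (c : 'I_k -> R) : 'M[R]_k :=
  \matrix_(i < k, j < k) if (i.+1 < k)%N then (j == i.+1 :> nat)%:R else c j.

Definition hweight (R : nzRingType) (n : nat) (v : 'rV[R]_n) : nat :=
  #|[set j : 'I_n | v 0 j != 0]|.

(* The linear code over the subfield S (given as a predicate on the ambient
   field L) generated by the rows of G : its codewords are u *m G with u having
   all coordinates in S. *)
Definition codeword (L : fieldType) (S : pred L) (m n : nat)
  (G : 'M[L]_(m, n)) (c : 'rV[L]_n) : Prop :=
  exists u : 'rV[L]_m, (forall i, u 0 i \in S) /\ c = u *m G.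

Definition min_dist_eq (L : fieldType) (S : pred L) (m n : nat)
  (G : 'M[L]_(m, n)) (d : nat) : Prop :=
  (forall c, codeword S G c -> c != 0 -> (d <= hweight c)%N) /\
  (exists2 c, codeword S G c & c != 0 /\ hweight c = d).

(* A k x k matrix M (over the subfield S) is MDS if [I_k | M] generates a code
   over S of length 2k and dimension k with minimal distance k+1. *)
Definition is_MDS_matrix (L : fieldType) (S : pred L) (k : nat) (M : 'M[L]_k) : Prop :=
  min_dist_eq S (row_mx (1%:M : 'M[L]_k) M) k.+1.

(* the subfield F_q of a field L, as the fixed points of x |-> x^q *)
Definition subFq (L : fieldType) (q : nat) : pred L := fun x => x ^+ q == x.

Definition g_poly (L : finFieldType) (q k : nat) (beta : L) : {poly L} :=
  if ~~ odd k then
    \prod_(((q - k)./2).+1 <= i < ((q + k)./2).+1) ('X - (beta ^+ i)%:P)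
  else
    \prod_(0 <= j < k) ('X - (beta ^ (j%:Z - ((k.-1)./2)%:Z))%:P).

(* Main.v *)
Require Import Defs.
From HB Require Import structures.
From mathcomp Require Import all_boot all_order all_algebra.
From mathcomp Require Import finfield.
From mathcomp Require Import zify ring.
Import GRing.Theory.
Local Open Scope ring_scope.

Lemma g_poly_eq (L : finFieldType) q k (beta : L) : ~~ odd q -> (0 < k)%N -> (k <= q)%N ->
  q.+1.-primitive_root beta -> exists b0,
  g_poly q k beta = \prod_(j<k) ('X - (beta^+(b0+j))%:P) /\ ((b0 + (b0 + k.-1)) %% q.+1 = 0)%N.
Proof.
move=> qe k0 kq pr.
have b1 : beta ^+ q.+1 = 1 by apply/eqP; rewrite prim_expr_order.
have bn0 : beta != 0.
  by apply/eqP=> b0; move: b1; rewrite b0 expr0n /= => /eqP; rewrite eq_sym oner_eq0.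
rewrite /g_poly; case: ifP => ko.
  have [q2 eq2] : exists q2, q = q2.*2 by exists q./2; rewrite even_halfK.
  have [k2 ek] : exists k2, k = k2.*2 by exists k./2; rewrite even_halfK ?ko.
  subst q k.
  rewrite -!doubleB -!doubleD !doubleK.
  exists (q2 - k2).+1; split.
    have -> : ((q2 + k2).+1 = (q2 - k2).+1 + k2.*2)%N by lia.
    rewrite -{1}[(q2 - k2).+1]add0n big_addn addKn big_mkord.
    by apply: eq_bigr => i _; rewrite addnC.
  have -> : ((q2 - k2).+1 + ((q2 - k2).+1 + k2.*2.-1) = q2.*2.+1)%N by lia.
  by rewrite modnn.
have [m em] : exists m, k = m.*2.+1.
  by exists k./2; have := odd_double_half k; rewrite (negbFE ko) add1n.
subst k; rewrite /= doubleK.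
exists (q.+1 - m)%N; split.
  rewrite big_mkord; apply: eq_bigr => j _; congr (_ - _%:P).
  apply: (mulIf (expf_neq0 m bn0)).
  rewrite -exprD.
  have -> : (q.+1 - m + j + m = q.+1 + j)%N by lia.
  rewrite exprD b1 mul1r.
  have -> : beta ^+ m = beta ^ (m%:Z) by [].
  by rewrite -expfzDr // subrK.
have -> : (q.+1 - m + (q.+1 - m + m.*2) = q.+1 * 2)%N by lia.
by rewrite modnMr.
Qed.

Lemma frob_coef (L : fieldType) (ch : 2%N \in [pchar L]) n k (F : 'I_k -> L) i :
  (\prod_(j < k) ('X - (F j)%:P))`_i ^+ (2 ^ n) =
  (\prod_(j < k) ('X - (F j ^+ (2 ^ n))%:P))`_i.
Proof.
elim: n F => [|n IH] F.
  by rewrite expr1; congr (_`_i); apply: eq_bigr => j _; rewrite expr1.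
rewrite expnSr exprM IH -(pFrobenius_autE ch) -coef_map rmorph_prod.
congr (_`_i); rewrite (eq_bigr (fun j => 'X - (F j ^+ (2^n*2))%:P)) // => j _.
by rewrite rmorphB /= map_polyX map_polyC /= pFrobenius_autE -exprM.
Qed.

Lemma bch (L : fieldType) (n k : nat) (beta b : L) (P : {poly L}) :
  n.-primitive_root beta -> (k + k <= n)%N -> b != 0 -> P != 0 ->
  (size P <= k + k)%N -> (forall j, (j < k)%N -> P.[b * beta ^+ j] = 0) ->
  (k < \sum_(i < k + k) (P`_i != 0)%R)%N.
Proof.
move=> pr hkn bn0 Pn0 hsz hroot.
set N := (k + k)%N.
pose E := [set i : 'I_N | P`_i != 0].
have -> : (\sum_(i < N) (P`_i != 0)%R = #|E|)%N.
  rewrite -sum1_card [RHS]big_mkcond /=; apply: eq_bigr => i _; rewrite inE.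
  by case: (P`_i != 0).
rewrite ltnNge; apply/negP => hle.
set w := #|E| in hle.
pose e (l : 'I_w) : 'I_N := enum_val l.
pose r : 'rV[L]_w := \row_l beta ^+ (e l).
pose x : 'cV[L]_w := \col_l (P`_(e l) * b ^+ (e l)).
pose V := Vandermonde w r.
have Vx : V *m x = 0.
  apply/matrixP => j j0; rewrite !mxE (ord1 j0).
  have jk : (j < k)%N by apply: leq_trans (ltn_ord j) hle.
  apply: etrans (hroot j jk); rewrite (horner_coef_wide _ hsz).
  rewrite (bigID (fun i => i \in E)) /= [X in _ + X]big1 ?addr0; last first.
    by move=> i; rewrite inE negbK => /eqP ->; rewrite mul0r.
  rewrite [RHS]big_enum_val /=.
  apply: eq_bigr => l _; rewrite !mxE.
  by rewrite exprMn -!exprM mulnC; ring.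
have detV : \det V != 0.
  rewrite det_Vandermonde; apply/prodf_neq0 => i _; apply/prodf_neq0 => j ij.
  rewrite !mxE subr_eq0 (eq_prim_root_expr pr) !modn_small; last 2 first.
    - exact: leq_trans (ltn_ord _) hkn.
    - exact: leq_trans (ltn_ord _) hkn.
  apply/eqP => /val_inj /enum_val_inj ji; by move: ij; rewrite ji ltnn.
have x0 : x = 0.
  have uV : V \in unitmx.
    rewrite unitmxE unitfE. exact detV.
  by rewrite -(mulKmx uV x) Vx mulmx0.
have i0N : ((size P).-1 < N)%N.
  have := size_poly_gt0 P; rewrite Pn0 => h; rewrite /N; lia.
pose i0 : 'I_N := Ordinal i0N.
have i0E : i0 \in E by rewrite inE /= -lead_coefE lead_coef_eq0.
have := congr1 (fun M : 'cV_w => M (enum_rank_in i0E i0) 0) x0.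
rewrite !mxE /e (enum_rankK_in i0E i0E) => /eqP.
by rewrite mulf_eq0 expf_eq0 (negbTE bn0) andbF orbF -lead_coefE lead_coef_eq0 (negbTE Pn0).
Qed.

Lemma comp_step (L : fieldType) (ch2 : (2%:R : L) = 0) n (g : {poly L})
  (gm : g \is monic) (gs : size g = n.+2) (v : 'rV[L]_n.+1) :
  rVpoly (v *m Companion (fun j : 'I_n.+1 => g`_j)) =
  'X * rVpoly v + v 0 ord_max *: g.
Proof.
apply/polyP => m; rewrite coef_rVpoly coefD coefXM coefZ.
case: insubP => [j jlt vj | mge].
  rewrite !mxE big_ord_recr /= !mxE ltnn /=.
  congr (_ + _); last by rewrite vj.
  case: m vj jlt => [|m] vj jlt.
    by rewrite /= big1 // => i _; rewrite !mxE /= ltnS ltn_ord vj mulr0.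
  have mn : (m < n)%N by [].
  rewrite /= coef_rVpoly (bigD1 (Ordinal mn)) //= big1 ?addr0.
    rewrite !mxE /= ltnS mn vj eqxx mulr1.
    by case: insubP => [i _ iv | ]; [congr (v 0 _); apply: val_inj | rewrite /= ltnS ltnW].
  move=> i /eqP ineq; rewrite !mxE /= ltnS ltn_ord vj.
  case: eqP => [[]/eqP| _]; last by rewrite mulr0.
  by move=> h; case: ineq; apply: val_inj; apply/eqP; rewrite /= eq_sym.
rewrite -leqNgt in mge.
case: m mge => [//|m] mge /=.
rewrite coef_rVpoly.
case: insubP => [i _ iv | mge2].
  have mn : m = n by move: (ltn_ord i); rewrite iv; lia.
  subst m.
  have -> : i = ord_max by apply: val_inj.
  have : g`_n.+1 = 1 by move/monicP: gm; rewrite /lead_coef gs.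
  move=> ->; rewrite mulr1 -mulr2n -mulr_natl ch2 mul0r //.
rewrite nth_default ?mulr0 ?addr0 // gs; move: mge2; rewrite -leqNgt; lia.
Qed.

Lemma hweightE (L : fieldType) m (v : 'rV[L]_m) :
  hweight v = (\sum_(j < m) (v 0 j != 0)%R)%N.
Proof.
rewrite /hweight -sum1_card [LHS]big_mkcond /=; apply: eq_bigr => i _; rewrite inE.
by case: (v 0 i != 0).
Qed.

Lemma weight_lb (L : fieldType) (ch2 : (2%:R : L) = 0) n (g : {poly L})
  (gm : g \is monic) (gs : size g = n.+2) (N : nat) (beta b : L) :
  N.-primitive_root beta -> (n.+1 + n.+1 <= N)%N -> b != 0 ->
  (forall j, (j < n.+1)%N -> g.[b * beta ^+ j] = 0) ->
  forall u : 'rV[L]_n.+1, u != 0 ->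
  (n.+1 < hweight (u *m row_mx 1%:M (Companion (fun j : 'I_n.+1 => g`_j) ^+ n.+1))%R)%N.
Proof.
move=> pr hN bn0 hroot u un0.
set C := Companion _.
have iter : forall m (v : 'rV[L]_n.+1), exists t, rVpoly (v *m C ^+ m) = 'X^m * rVpoly v + t * g.
  elim=> [|m IH] v.
    by exists 0; rewrite expr0 mulmx1 expr0 mul1r mul0r addr0.
  have [t ht] := IH v.
  exists ('X * t + ((v *m C ^+ m) 0 ord_max)%:P).
  rewrite exprSr -mulmxE mulmxA comp_step // ht exprSr.
  by rewrite -mul_polyC; ring.
have [t ht] := iter n.+1 u.
set w := u *m C ^+ n.+1 in ht *.
pose P := rVpoly w + 'X^(n.+1) * rVpoly u.
have pp : forall p : {poly L}, p + p = 0.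
  by move=> p; apply/polyP => i; rewrite coefD coef0 -mulr2n -mulr_natl ch2 mul0r.
have PE : P = t * g by rewrite /P ht addrAC pp add0r.
have cl : forall i : 'I_n.+1, P`_(lshift n.+1 i) = w 0 i.
  move=> i; rewrite coefD coefXnM /= ltn_ord addr0 coef_rVpoly_ord //.
have cr : forall i : 'I_n.+1, P`_(rshift n.+1 i) = u 0 i.
  move=> i; rewrite coefD coefXnM /= ltnNge leq_addr /= addKn coef_rVpoly_ord.
  by rewrite coef_rVpoly insubF ?add0r // ltnNge leq_addr.
have Pn0 : P != 0.
  apply/negP => /eqP P0; move/negP: un0; apply; apply/eqP/matrixP => i0 i; rewrite (ord1 i0) mxE -cr P0 coef0 //.
have Psz : (size P <= n.+1 + n.+1)%N.
  rewrite /P; apply: leq_trans (size_add _ _) _; rewrite geq_max; apply/andP; split.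
    by apply: leq_trans (size_poly _ _) _; apply: leq_addr.
  apply: leq_trans (size_polyMleq _ _) _; rewrite size_polyXn.
  have hs : (size (rVpoly u) <= n.+1)%N by apply: size_poly.
  lia.
have Proot : forall j, (j < n.+1)%N -> P.[b * beta ^+ j] = 0.
  by move=> j hj; rewrite PE hornerM hroot // mulr0.
have := @bch L N n.+1 beta b P pr hN bn0 Pn0 Psz Proot.
rewrite mul_mx_row mulmx1 hweightE !big_split_ord /=.
rewrite addnC; congr (_ < _ + _)%N; apply: eq_bigr => i _.
  by have := cr i; rewrite /= => ->; rewrite row_mxEl.
by have := cl i; rewrite /= => ->; rewrite row_mxEr.
Qed.

Theorem mainTheorem2 (s : nat) (L : finFieldType) (k : nat) (beta : L) :
  (1 <= s)%N ->
  #|L| = ((2 ^ s) ^ 2)%N ->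
  (1 <= k <= (2 ^ s)./2)%N ->
  (2 ^ s).+1.-primitive_root beta ->
  let q := (2 ^ s)%N in
  let g := g_poly q k beta in
  (forall i : nat, g`_i \in subFq q) /\
  g \is monic /\ size g = k.+1 /\
  \sum_(i < k.+1) g`_i *: 'X^(k - i) = g /\
  is_MDS_matrix (subFq q)
    ((Companion (fun j : 'I_k => g`_j)) ^+ k).
Proof.
move=> hs hL /andP[hk1 hk2] pr q g.
have qe : ~~ odd q by rewrite /q oddX /= orbF; case: (s) hs.
have q2 : (2 <= q)%N by rewrite /q; case: (s) hs => // s' _; rewrite expnS; have := expn_gt0 2 s'; lia.
have kq : (k + k <= q)%N.
  have := odd_double_half q; rewrite (negbTE qe) add0n => hq.
  rewrite -[in X in (_ <= X)%N]hq -addnn; lia.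
have ch : (2 \in [pchar L])%N.
  by apply: (@card_finPcharP _ 2 (s * 2)) => //; rewrite hL expnM.
have ch2 : (2%:R : L) = 0 := pcharf0 ch.
have [b0 [gE hb]] := @g_poly_eq L q k beta qe hk1 (leq_trans (leq_addr _ _) kq) pr.
rewrite -/g in gE.
pose a (j : nat) := beta ^+ (b0 + j).
have b1 : beta ^+ q.+1 = 1 by apply/eqP; rewrite prim_expr_order.
have bn0 : beta != 0.
  by apply/eqP=> b00; move: b1; rewrite b00 expr0n /= => /eqP; rewrite eq_sym oner_eq0.
have an0 : forall j, a j != 0 by move=> j; rewrite expf_neq0.
have ainv : forall j : 'I_k, (a j)^-1 = a (rev_ord j).
  move=> j; apply: (mulfI (an0 j)); rewrite mulfV // /a -exprD.
  have -> : (b0 + j + (b0 + (rev_ord j)) = b0 + (b0 + k.-1))%N.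
    by rewrite /=; have := ltn_ord j; lia.
  by rewrite -(prim_expr_mod pr) hb expr0.
have afrob : forall e, (beta ^+ e) ^+ q = (beta ^+ e)^-1.
  move=> e; apply: (mulIf (expf_neq0 e bn0)); rewrite mulVf ?expf_neq0 //.
  by rewrite -exprSr exprAC b1 expr1n.
have ainj : forall i j : 'I_k, a i = a j -> i = j.
  move=> i j; rewrite /a !exprD => /(mulfI (expf_neq0 b0 bn0)) /eqP.
  rewrite (eq_prim_root_expr pr) !modn_small.
  - by move=> /eqP /val_inj.
  - by have := ltn_ord j; lia.
  - by have := ltn_ord i; lia.
have groot : forall j : 'I_k, g.[a j] = 0.
  move=> j; rewrite gE horner_prod (bigD1 j) //= hornerXsubC subrr mul0r //.
have gm : g \is monic by rewrite gE monic_prod_XsubC.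
have gs : size g = k.+1.
  by rewrite gE size_prod_XsubC [index_enum _]unlock -enumT size_enum_ord.
split.
  move=> i; rewrite unfold_in /subFq; apply/eqP.
  have gfix : \prod_(j < k) ('X - (beta ^+ (b0 + j) ^+ (2 ^ s))%:P) =
     \prod_(j < k) ('X - (beta ^+ (b0 + j))%:P).
    rewrite [RHS](reindex_inj rev_ord_inj) /=; apply: eq_bigr => j _.
    by rewrite afrob ainv.
  by rewrite gE /q (@frob_coef L ch s) gfix.
split => //; split => //.
split.
  set r := \sum_(i < k.+1) _.
  have g0 : g`_k = 1 by move/monicP: gm; rewrite /lead_coef gs.
  have rcoef : forall m, r`_m = if (m <= k)%N then g`_(k - m) else 0.
    move=> m; rewrite coef_sum.
    under eq_bigr => i _ do rewrite coefZ coefXn.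
    case: leqP => hm.
      have hkm : (k - m < k.+1)%N by lia.
      rewrite (bigD1 (Ordinal hkm)) //= big1 ?addr0.
        by rewrite subKn // eqxx mulr1.
      move=> i /eqP ni; case: eqP => [mi|]; last by rewrite mulr0.
      by case: ni; apply: val_inj => /=; have := ltn_ord i; lia.
    rewrite big1 // => i _; case: eqP => [mi|]; last by rewrite mulr0.
    by have := ltn_ord i; lia.
  have hr : forall x, x != 0 -> r.[x] = x ^+ k * g.[x^-1].
    move=> x xn0; rewrite horner_sum (horner_coef_wide _ (eq_leq gs)) mulr_sumr.
    apply: eq_bigr => i _; rewrite hornerZ hornerXn exprVn expfB_cond.
      by rewrite mulrCA.
    by rewrite (negbTE xn0) add0n -ltnS.
  have rroot : forall j : 'I_k, root r (a j).
    by move=> j; rewrite /root hr // ainv groot mulr0.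
  set rs := [seq a (nat_of_ord j) | j : 'I_k <- index_enum 'I_k].
  have ar : all (root r) rs by apply/allP => y /mapP [j _ ->]; apply: rroot.
  have ur : uniq_roots rs.
    rewrite uniq_rootsE map_inj_uniq ?index_enum_uniq //.
  have [t rt] := uniq_roots_prod_XsubC ar ur.
  rewrite big_map -gE in rt.
  have r0 : r`_0 = 1 by rewrite rcoef // subn0.
  have rn0 : r != 0.
    by apply/eqP => r00; move: r0; rewrite r00 coef0 => /eqP; rewrite eq_sym oner_eq0.
  have tn0 : t != 0.
    by apply/eqP => t0; move/eqP: rn0; apply; rewrite rt t0 mul0r.
  have rsz : (size r <= k.+1)%N.
    apply: leq_trans (size_sum _ _ _) _; apply/bigmax_leqP => i _.
    apply: leq_trans (size_scale_leq _ _) _; by rewrite size_polyXn ltnS leq_subr.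
  have tsz : (size t <= 1)%N.
    move: rsz; rewrite rt size_Mmonic // gs addnS /= => h.
    by rewrite -(leq_add2r k) add1n; exact: h.
  have tc := size1_polyC tsz.
  set c := t`_0 in tc.
  rewrite tc mul_polyC in rt.
  have e0 : 1 = c * g`_0 by rewrite -r0 rt coefZ.
  have ek : g`_0 = c.
    by have := rcoef k; rewrite leqnn subnn rt coefZ g0 mulr1 => ->.
  have c1 : c = 1.
    have h : (c - 1) * (c - 1) = (c * c - 1) + 2%:R * (1 - c) by ring.
    rewrite ek in e0; rewrite -e0 subrr ch2 mul0r addr0 in h.
    by apply/eqP; rewrite -subr_eq0; move/eqP: h; rewrite mulf_eq0 orbb.
  by rewrite rt c1 scale1r.
have [n kn] : exists n, k = n.+1 by exists k.-1; rewrite prednK.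
subst k.
have roots : forall j, (j < n.+1)%N -> g.[beta ^+ b0 * beta ^+ j] = 0.
  by move=> j hj; rewrite -exprD; exact: (groot (Ordinal hj)).
have kq1 : (n.+1 + n.+1 <= q.+1)%N by apply: leq_trans kq _.
have lb := @weight_lb L ch2 n g gm gs q.+1 beta (beta ^+ b0) pr kq1 (expf_neq0 _ bn0) roots.
have qn0 : (q != 0)%N by rewrite -lt0n; apply: leq_trans q2.
split.
  move=> c [u [uS ->]] cn0.
  have un0 : u != 0.
    by apply/eqP => u0; move/eqP: cn0; apply; rewrite u0 mul0mx.
  exact: lb u un0.
pose u : 'rV[L]_n.+1 := \row_i ((i == ord0)%:R).
have un0 : u != 0.
  by apply/eqP => /matrixP /(_ 0 ord0); rewrite !mxE eqxx => /eqP; rewrite oner_eq0.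
exists (u *m row_mx 1%:M (Companion (fun j : 'I_n.+1 => g`_j) ^+ n.+1)).
  exists u; split => // i; rewrite unfold_in /subFq mxE.
  by case: (i == ord0); rewrite ?expr1n ?expr0n ?(negbTE qn0).
split.
  apply/eqP => h.
  have := congr1 (fun M : 'rV[L]_(n.+1 + n.+1) => M 0 (lshift n.+1 ord0)) h.
  by rewrite /= mul_mx_row mulmx1 row_mxEl !mxE eqxx => /eqP; rewrite oner_eq0.
apply/eqP; rewrite eqn_leq (lb u un0) andbT.
rewrite hweightE mul_mx_row mulmx1 big_split_ord /=.
have -> : (\sum_(i < n.+1) (row_mx u (u *m Companion (fun j : 'I_n.+1 => g`_j) ^+ n.+1) 0 (lshift n.+1 i) != 0)%R = 1)%N.
  rewrite big_ord_recl row_mxEl !mxE eqxx oner_eq0 /= big1 // => i _.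
  by rewrite row_mxEl !mxE -val_eqE /= eqxx.
rewrite add1n ltnS.
apply: (@leq_trans (\sum_(i < n.+1) 1)%N).
  by apply: leq_sum => i _; exact: leq_b1.
by rewrite big_const_ord iter_addn_0 mul1n.
Qed.
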